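(* Let $k\ge 3$, constants $c_1\ge\dots\ge c_k>0$ with $\sum c_i=1$, and for $n$ with all $c_in$ integers let $G_n$ be the complete $k$-partite graph with parts $V_1,\dots,V_k$, $|V_i|=c_in$. Let $w_0$ be a uniformly random initial weighting. If $c_i<\tfrac12$, then $$\mathbb{E}(m_i)\le \frac{2c_i}{1-2c_i}.$$
   Context: An initial weighting of a graph on vertex set $V$, $|V|=n$, is a bijection $w_0:V\to\{-n,\dots,-1\}$; here $w_0$ is uniform among all $n!$ such bijections. The quantity $m_i$ is defined by $$m_i=\max\Big\{x\ge 0:\ \exists\, y\ge 0 \text{ with } 2y+x\le n \text{ and } \Big|\bigcup_{j=1}^{2y+x}w_0^{-1}(-j)\cap V_i\Big|=y+x\Big\},$$ equivalently $m_i=\max_{0\le t\le n}X(t)$ where $X(t)=|\{v\in V_i: w_0(v)\ge -t\}|-|\{v\in V\setminus V_i: w_0(v)\ge -t\}|$. A complete $k$-partite graph with parts $V_1,\dots,V_k$ has an edge between $u$ and $v$ iff they lie in different parts. *)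

(* Defs.v *)
From HB Require Import structures.
From mathcomp Require Import all_boot all_order all_algebra all_fingroup.
Set Implicit Arguments. Unset Strict Implicit. Unset Printing Implicit Defensive.
Import Order.TTheory GRing.Theory Num.Theory.

(* Vertex set V = 'I_n.  An initial weighting w0 : V -> {-n,...,-1} (bijection)
   is encoded by a permutation s : {perm 'I_n} via  w0 v = -(s v + 1).
   Hence  w0 v >= -t  <->  s v < t. *)
Definition weight n (s : {perm 'I_n}) (v : 'I_n) : int := - ((s v).+1 : nat)%:Z.

Definition Xwalk n (A : {set 'I_n}) (s : {perm 'I_n}) (t : nat) : int :=
  (#|[set v in A | (weight s v >= - (t%:Z))%R]|%:Z
   - #|[set v in ~: A | (weight s v >= - (t%:Z))%R]|%:Z)%R.

(* m_A = max_{0<=t<=n} X(t).  Since X(0) = 0 this maximum is a natural number;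
   we take the max of the nonnegative parts, which coincides with it. *)
Definition mval n (A : {set 'I_n}) (s : {perm 'I_n}) : nat :=
  \max_(t < n.+1) `|Xwalk A s t|%N * ((0 <= Xwalk A s t)%R : nat).

Definition Em (R : numFieldType) n (A : {set 'I_n}) : R :=
  ((\sum_(s : {perm 'I_n}) (mval A s)%:R) / (n`!)%:R)%R.

Definition kpart_adj n k (part : 'I_n -> 'I_k) : rel 'I_n :=
  fun u v => part u != part v.

Definition Vpart n k (part : 'I_n -> 'I_k) (j : 'I_k) : {set 'I_n} :=
  [set v | part v == j].

(* Main.v *)
Require Import Defs.
From HB Require Import structures.
From mathcomp Require Import all_boot all_order all_algebra all_fingroup.
From mathcomp Require Import zify.
From mathcomp Require Import ring lra.
Import Order.TTheory GRing.Theory Num.Theory.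

Module Helpers.
Set Implicit Arguments. Unset Strict Implicit. Unset Printing Implicit Defensive.

Fixpoint bseqs (n : nat) : seq (seq bool) :=
  if n is n'.+1 then map (cons true) (bseqs n') ++ map (cons false) (bseqs n')
  else [:: [::]].

Fixpoint Mz (x : seq bool) : nat :=
  if x is b :: x' then (if b then (Mz x').+1 else (Mz x').-1) else 0.

Definition F n a m := \sum_(x <- bseqs n | count id x == a) (m <= Mz x).

Lemma F_S n a m : F n.+1 a m =
  (if a is a'.+1 then F n a' m.-1 else 0) + (if m is 0 then F n a 0 else F n a m.+1).
Proof.
rewrite /F /= big_cat !big_map /=; congr (_ + _).
  case: a => [|a]; first by rewrite big1.
  by apply: eq_bigr => x _; case: m => [|m].
case: m => [|m]; first by [].
by apply: eq_bigr => x _ /=; case: (Mz x) => [|[|k]].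
Qed.

Lemma F_bound n a m : F n a m <= (m <= a) * 'C(n, a - m).
Proof.
elim: n a m => [|n IH] a m.
  rewrite /F /= big_cons big_nil /=; case: a => [|a] //=.
  by rewrite addn0; case: m.
rewrite F_S; case: m => [|m].
  case: a => [|a].
    move=> /=; have := IH 0 0; rewrite !bin0; lia.
  move=> /=; have := IH a.+1 0; have := IH a 0; rewrite !subn0 binS /=; lia.
case: a => [|a].
  move=> /=; have := IH 0 m.+2; rewrite /=; lia.
rewrite /= subSS.
have H1 := IH a m; have H2 := IH a.+1 m.+2.
rewrite subSS in H2.
case: (leqP m a) => Hma.
  case E: (a - m) => [|d].
    have E2 : a - m.+1 = 0 by lia.
    move: H1 H2; rewrite E E2 !bin0; lia.
  have E2 : a - m.+1 = d by lia.
  move: H1 H2; rewrite E E2 binS; lia.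
have F1 : (m <= a) = false by lia.
have F2 : (m.+2 <= a.+1) = false by lia.
rewrite F1 in H1; rewrite F2 in H2; move: H1 H2; rewrite /=; lia.
Qed.

Definition Kc n a := \sum_(x <- bseqs n | count id x == a) 1.

Lemma Kc_bin n a : Kc n a = 'C(n, a).
Proof.
elim: n a => [|n IH] a.
  by rewrite /Kc /= big_cons big_nil; case: a.
rewrite /Kc /= big_cat !big_map /=.
case: a => [|a].
  by rewrite big1 // add0n bin0; have := IH 0; rewrite bin0.
by rewrite binS -!IH /Kc addnC.
Qed.

Lemma Mz_size x : Mz x <= size x.
Proof. elim: x => [|[] x IH] //=; lia. Qed.

Lemma sum_lt n q : \sum_(0 <= m < n) (m < q) = minn q n.
Proof.
elim: n => [|n IH]; first by rewrite big_geq // minn0.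
rewrite big_nat_recr //= IH; lia.
Qed.

Definition Pk n k := \sum_(0 <= m < k) 'C(n, k - m.+1).

Lemma Pk_S n k : Pk n k.+1 = 'C(n, k) + Pk n k.
Proof.
by rewrite /Pk big_nat_recl //= subn1 /=; congr (_ + _); apply: eq_bigr => i _; rewrite subSS.
Qed.

Lemma Pk_bound n k : 2 * k <= n -> Pk n k * (n + 1 - 2 * k) <= k * 'C(n, k).
Proof.
elim: k => [|k IH] Hk; first by rewrite /Pk big_geq.
rewrite Pk_S mul_bin_left.
have {}IH : Pk n k * (n + 1 - 2 * k) <= k * 'C(n, k) by apply: IH; lia.
move: IH; set c := 'C(n, k); set p := Pk n k => IH.
nia.
Qed.

Definition T n a := \sum_(x <- bseqs n | count id x == a) Mz x.

Lemma size_bseqs n x : x \in bseqs n -> size x = n.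
Proof.
elim: n x => [|n IH] x /=; first by rewrite inE => /eqP->.
rewrite mem_cat => /orP[] /mapP[y /IH Hy ->] /=; by rewrite Hy.
Qed.

Lemma T_bound n a : a <= n -> T n a <= Pk n a.
Proof.
move=> Han.
rewrite /T.
rewrite big_seq_cond (eq_bigr (fun x => \sum_(0 <= m < n) (m < Mz x))); last first.
  move=> x /andP[Hx _]; rewrite sum_lt; have := Mz_size x; rewrite (size_bseqs Hx); lia.
rewrite -big_seq_cond exchange_big /=.
apply: (@leq_trans (\sum_(0 <= m < n) (m.+1 <= a) * 'C(n, a - m.+1))).
  by apply: leq_sum => m _; apply: F_bound.
rewrite (big_cat_nat (leq0n a) Han) /= [X in _ + X]big1_seq ?addn0; last first.
  move=> i /andP[_]; rewrite mem_index_iota => /andP[H _].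
  by have -> : (i.+1 <= a) = false by lia.
rewrite /Pk leq_eqVlt; apply/orP; left; apply/eqP.
apply: eq_big_nat => i /andP[_ H].
by rewrite H mul1n.
Qed.

Definition bs n (A : {set 'I_n}) (s : {perm 'I_n}) : seq bool :=
  [seq ((s^-1)%g j \in A) | j <- enum 'I_n].

Lemma size_bs n A s : size (@bs n A s) = n.
Proof. by rewrite size_map size_enum_ord. Qed.

Lemma nth_bs n A s (j : 'I_n) : nth false (@bs n A s) j = ((s^-1)%g j \in A).
Proof. by rewrite (nth_map j) ?size_enum_ord // nth_ord_enum. Qed.

Lemma card_sum (T : finType) (P : pred T) : #|[set x | P x]| = \sum_x (P x : nat).
Proof.
rewrite -sum1_card big_mkcond /=; apply: eq_bigr => x _; rewrite inE; by case: (P x).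
Qed.

Lemma count_bs n A s : count id (@bs n A s) = #|A|.
Proof.
rewrite count_map -sum1_count big_enum_cond /= sum1_card.
rewrite -(card_preimset A (@perm_inj _ (s^-1)%g)).
by apply: eq_card => j; rewrite !inE.
Qed.

Local Open Scope ring_scope.
Definition W (x : seq bool) (t : nat) : int :=
  \sum_(0 <= j < t) (if nth false x j then 1 else -1).

Lemma Xwalk_W n A s (t : nat) : (t <= n)%N -> Xwalk A s t = W (@bs n A s) t.
Proof.
move=> Htn.
have cond : forall v, (- (t%:Z) <= weight s v) = (s v < t)%N.
  by move=> v; rewrite /weight lerN2 lez_nat.
rewrite /Xwalk !card_sum -!natz !natr_sum -sumrB.
pose G (j : 'I_n) : int := if (j < t)%N then (if (s^-1)%g j \in A then 1 else -1) else 0.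
rewrite (eq_bigr (fun v => G (s v))); last first.
  move=> v _; rewrite /G permK inE (_ : 1 *- t = - (t%:Z)) ?natz // cond.
  by case: (s v < t)%N; case: (v \in A); rewrite /= ?andbF ?subr0 ?sub0r.
rewrite -(reindex_inj (@perm_inj _ s) (P := xpredT) (F := G)).
pose H (j : nat) : int := if (j < t)%N then (if nth false (bs A s) j then 1 else -1) else 0.
rewrite (eq_bigr (fun j : 'I_n => H j)); last first.
  by move=> j _; rewrite /G /H nth_bs.
rewrite -(big_mkord xpredT H) (big_cat_nat (leq0n t) Htn) /=.
rewrite [X in _ + X]big1_seq ?addr0; last first.
  move=> i /andP[_]; rewrite mem_index_iota => /andP[Hi _].
  by rewrite /H ltnNge Hi.
apply: eq_big_nat => i /andP[_ Hi]; by rewrite /H Hi.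
Qed.

Lemma W0 x : W x 0 = 0.
Proof. by rewrite /W big_geq. Qed.

Lemma WS b x t : W (b :: x) t.+1 = (if b then 1 else -1) + W x t.
Proof. by rewrite /W big_nat_recl. Qed.

Lemma W_Mz x : (forall t, (t <= size x)%N -> W x t <= (Mz x)%:Z) /\
   exists2 t, (t <= size x)%N & W x t = (Mz x)%:Z.
Proof.
elim: x => [|b x [IH1 [t0 Ht0 IH2]]].
  split; first by move=> [|t] // _; rewrite W0.
  by exists 0%N => //; rewrite W0.
split.
  move=> [|t] Ht; first by rewrite W0.
  rewrite WS; have := IH1 t Ht; clear Ht; case: b => /=.
    lia.
  case: (Mz x) => [|k] H /=; lia.
case: b => /=.
  by exists t0.+1 => //; rewrite WS IH2; lia.
case E: (Mz x) => [|k].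
  by exists 0%N => //; rewrite W0.
by exists t0.+1 => //; rewrite WS IH2 E /=; lia.
Qed.

Lemma absz_pos (w : int) (m : nat) : w <= m%:Z ->
  (`|w| * (0 <= w)%R <= m)%N.
Proof. by case: w => [k|k] //=; rewrite ?muln1 ?muln0 // lez_nat. Qed.

Lemma mval_Mz n A s : mval A s = Mz (@bs n A s).
Proof.
have [H1 [t0 Ht0 H2]] := W_Mz (bs A s).
rewrite size_bs in Ht0 H1.
apply/eqP; rewrite eqn_leq; apply/andP; split.
  apply/bigmax_leqP => t _.
  have Ht : (t <= n)%N by rewrite -ltnS ltn_ord.
  rewrite (Xwalk_W _ _ Ht); exact: absz_pos (H1 t Ht).
have Ht0' : (t0 < n.+1)%N by [].
apply: leq_trans (leq_bigmax (Ordinal Ht0')).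
by rewrite /= (Xwalk_W _ _ Ht0) H2 /= muln1.
Qed.

Local Close Scope ring_scope.

Lemma onehot n (G : seq bool -> nat) y : size y = n ->
  \sum_(x <- bseqs n) (y == x) * G x = G y.
Proof.
elim: n G y => [|n IH] G y.
  by case: y => // _; rewrite /= big_cons big_nil /= mul1n addn0.
case: y => [|b y] //= [Hy]; rewrite big_cat !big_map /=.
case: b.
  rewrite (IH (fun x => G (true :: x))) // big1 ?addn0 //.
rewrite (IH (fun x => G (false :: x))) // big1 //.
Qed.

Lemma count_bool (P : pred bool) x :
  count P x = P true * count id x + P false * count negb x.
Proof.
elim: x => [|b x IH] /=; first by rewrite !muln0.
rewrite IH; case: b; case: (P true); case: (P false);
  rewrite /= ?mul1n ?mul0n ?add0n ?addn0 ?addnS ?addSn //.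
Qed.

Lemma perm_eq_bool x1 x2 : size x1 = size x2 -> count id x1 = count id x2 ->
  perm_eq x1 x2.
Proof.
move=> Hs Hc; apply/seq.permP => P; rewrite (count_bool P x1) (count_bool P x2) Hc.
have E : forall x : seq bool, count negb x = size x - count id x.
  move=> x; rewrite -(count_predC id x); rewrite addKn //.
by rewrite !E Hs Hc.
Qed.

Lemma map_perm_eq n (f g : 'I_n -> bool) (p : {perm 'I_n}) :
  ([seq f (p j) | j <- enum 'I_n] == [seq g (p j) | j <- enum 'I_n]) =
  ([seq f j | j <- enum 'I_n] == [seq g j | j <- enum 'I_n]).
Proof.
apply/eqP/eqP => /eq_in_map H; apply/eq_in_map => j _.
  by have := H ((p^-1)%g j) (mem_enum _ _); rewrite permKV.
exact: H (p j) (mem_enum _ _).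
Qed.

Lemma fib_eq n (A : {set 'I_n}) x1 x2 : size x1 = n -> size x2 = n ->
  count id x1 = count id x2 ->
  \sum_(s : {perm 'I_n}) (bs A s == x1) = \sum_(s : {perm 'I_n}) (bs A s == x2).
Proof.
move=> H1 H2 Hc.
have T1 : size x1 == n by apply/eqP.
pose t1 : n.-tuple bool := Tuple T1.
have : perm_eq x2 t1 by apply: perm_eq_bool => //=; rewrite H1 H2.
case/tuple_permP => p Hx2.
rewrite [RHS](reindex_inj (@mulIg _ (p^-1)%g)) /=.
apply: eq_bigr => s _.
have -> : x2 = [seq tnth t1 (p i) | i <- enum 'I_n].
  rewrite Hx2 -[in LHS]map_tnth_enum; apply: eq_map => i; exact: tnth_mktuple.
have -> : x1 = [seq tnth t1 i | i <- enum 'I_n] by rewrite map_tnth_enum.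
have -> : bs A (s * (p^-1))%g = [seq ((s^-1)%g (p j) \in A) | j <- enum 'I_n].
  by apply: eq_map => j; rewrite invMg invgK permM.
by rewrite (map_perm_eq (fun j => (s^-1)%g j \in A) (tnth t1)).
Qed.

Lemma sum_perm_bs n (A : {set 'I_n}) (G : seq bool -> nat) :
  \sum_(s : {perm 'I_n}) G (bs A s) =
  (\sum_(s : {perm 'I_n}) (bs A s == bs A 1%g)) *
  \sum_(x <- bseqs n | count id x == #|A|) G x.
Proof.
rewrite (eq_bigr (fun s => \sum_(x <- bseqs n) (bs A s == x) * G x)); last first.
  by move=> s _; rewrite onehot // size_bs.
rewrite exchange_big /= big_distrr /= [RHS]big_mkcond /=.
apply: eq_big_seq => x Hx.
rewrite -big_distrl /=.
case: ifP => Hc.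
  rewrite (@fib_eq n A x (bs A 1%g)) ?size_bs ?(size_bseqs Hx) ?count_bs ?(eqP Hc) //.
rewrite big1 ?mul0n // => s _.
have /negbTE -> // : bs A s != x by apply/eqP => E; move: Hc; rewrite -E count_bs eqxx.
Qed.

End Helpers.
Import Helpers.

Local Open Scope ring_scope.

Theorem lemma2 (R : realFieldType) (k : nat) (c : 'I_k -> R) (n : nat)
    (part : 'I_n -> 'I_k) (i : 'I_k) :
  (3 <= k)%N ->
  (forall j1 j2 : 'I_k, (j1 <= j2)%N -> c j2 <= c j1) ->
  (forall j, 0 < c j) ->
  \sum_(j < k) c j = 1 ->
  (forall j, (#|Vpart part j|)%:R = c j * n%:R) ->
  c i < 1 / 2 ->
  Em R (Vpart part i) <= 2 * c i / (1 - 2 * c i).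
Proof.
move=> _ _ cpos _ Hcard Hc.
have HA := Hcard i.
set A := Vpart part i in HA *.
set a := #|A| in HA *.
have Han : (a <= n)%N by rewrite /a; apply: leq_trans (max_card _) _; rewrite card_ord.
rewrite /Em.
set N := (\sum_(s : {perm 'I_n}) (bs A s == bs A 1%g))%N.
have E1 : \sum_(s : {perm 'I_n}) (mval A s)%:R = (N * T n a)%:R :> R.
  rewrite -natr_sum (eq_bigr (fun s => Mz (bs A s))) ?sum_perm_bs //.
  by move=> s _; rewrite mval_Mz.
have E2 : n`! = (N * Kc n a)%N.
  by rewrite -card_Sn -sum1_card (sum_perm_bs A (fun _ => 1%N)).
rewrite E1 E2 Kc_bin.
have Tle := T_bound Han.
have Npos : (0 < N)%N.
  by move: (fact_gt0 n); rewrite E2 muln_gt0 => /andP[].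
have Kpos : (0 < 'C(n, a))%N by rewrite bin_gt0.
have ci := cpos i.
have den : 0 < 1 - 2 * c i by lra.
have rhs0 : 0 <= 2 * c i / (1 - 2 * c i) by rewrite divr_ge0 // ?mulr_ge0 // ltW.
case: (posnP a) => Ha0.
  have : T n a = 0%N by apply/eqP; rewrite -leqn0; move: Tle; rewrite Ha0 /Pk big_geq.
  by move=> ->; rewrite muln0 mul0r.
have n_pos : (0 < n)%N by apply: leq_trans Han.
have H2a : (2 * a < n)%N.
  rewrite -(ltr_nat R) natrM HA.
  have nR : 0 < n%:R :> R by rewrite ltr0n.
  nra.
have Pb := Pk_bound (ltnW H2a).
have key : (T n a * (n - 2 * a) <= 2 * a * 'C(n, a))%N.
  apply: leq_trans (_ : T n a * (n + 1 - 2 * a) <= _)%N.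
    by apply: leq_mul => //; lia.
  apply: leq_trans (leq_mul Tle (leqnn _)) _.
  apply: leq_trans Pb _; rewrite leq_mul2r; apply/orP; right; lia.
move: key; rewrite -(ler_nat R) !natrM natrB ?(ltnW H2a) // natrM HA => key.
set t := (T n a)%:R : R in key *.
set K := ('C(n, a))%:R : R in key *.
set NN := N%:R : R.
set nn := n%:R : R in key.
have NNp : 0 < NN by rewrite ltr0n.
have Kp : 0 < K by rewrite ltr0n.
have nnp : 0 < nn by rewrite ltr0n.
rewrite -mulf_div divff ?gt_eqF // mul1r.
rewrite ler_pdivrMr // mulrAC ler_pdivlMr //.
have t0 : 0 <= t by rewrite ler0n.

nra.
Qed.
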